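(* Let $G=(V,E)$ be a connected graph, let $k$ be an integer with $1\le k\le |V|$, and let $D$, $A$, $\rho$, $\alpha$ and $d$ be as described in the context (in particular $|V\setminus D|\ge k$). Let $x$ be an optimal solution of the reduced ILP described in the context. Suppose the solution is sufficient, i.e. for every $v\in V\setminus A$ we have $x_{v,d(v)}=0$ or $d(v)\ge \mathrm{ecc}(v)$. Then $S^*=\{v\in V\setminus D : x_{v,0}=1\}$ satisfies $|S^*|=k$ and $$f(S^* )=\min\{f(S) : S\subseteq V,\ |S|=k\},$$ i.e. $S^*$ is a globally optimal solution of Group Closeness Centrality Maximization; moreover the optimal objective value of the reduced ILP equals $f(S^* )$.
   Context: All graphs are finite, undirected, unweighted, without self-loops, and connected. $\mathrm{dist}(u,v)$ is the shortest-path distance; for $S\subseteq V$ nonempty, $\mathrm{dist}(u,S)=\min_{s\in S}\mathrm{dist}(u,s)$. The group farness is $f(S)=\sum_{u\in V}\mathrm{dist}(u,S)$; Group Closeness Centrality Maximization asks for $S\subseteq V$ with $|S|=k$ maximizing $c(S)=(|V|-|S|)/f(S)$, equivalently minimizing $f(S)$. The eccentricity is $\mathrm{ecc}(v)=\max_{u\in V}\mathrm{dist}(u,v)$. $N[v]$ is the closed neighborhood of $v$; a vertex $u$ dominates $v$ if $N[v]\subseteq N[u]$. Data: (i) $D\subseteq V$ is a set of vertices such that every $v\in D$ is dominated by some vertex $u\in V\setminus D$, and $|V\setminus D|\ge k$. (ii) $A\subseteq D$ is a set of ''absorbed'' vertices with a map $\rho:A\to V\setminus A$ such that for every $u\in\rho(A)$,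 the set $\rho^{-1}(u)$ is a union of vertex sets of connected components of $G-u$, each such component is contained in $D$, and every vertex $w\in\rho^{-1}(u)$ is dominated by $u$. For $u\in V\setminus A$ let $\alpha(u)=|\rho^{-1}(u)|$ (so $\alpha(u)=0$ if $u\notin\rho(A)$). (iii) $d:V\setminus A\to\mathbb{Z}_{\ge 1}$ is any function. Reduced ILP: binary variables $x_{v,i}\in\{0,1\}$ for $v\in V\setminus A$ and $i\in\{0,\dots,d(v)\}$. Minimize $\sum_{v\in V\setminus A}\sum_{i=0}^{d(v)} x_{v,i}\,(\alpha(v)(i+1)+i)$ subject to (1) $\sum_{v\in V\setminus D} x_{v,0}=k$; (2) $\sum_{i=0}^{d(v)} x_{v,i}=1$ for all $v\in V\setminus A$; (3) $x_{v,i}\le \sum_{w\in V\setminus D:\ \mathrm{dist}(v,w)=i} x_{w,0}$ for all $v\in V\setminus A$ and all $i\in\{0,\dots,d(v)-1\}$ (an empty sum is $0$). The variable $x_{v,d(v)}$ is not subject to constraint (3); it encodes ''$\mathrm{dist}(v,S)\ge d(v)$'' where $S$ is the selected set. *)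

(* Defs.v *)
From mathcomp Require Import all_boot.
Set Implicit Arguments. Unset Strict Implicit. Unset Printing Implicit Defensive.

Section GraphDefs.
Variables (T : finType) (e : rel T).

Fixpoint ball (u : T) (n : nat) : {set T} :=
  match n with
  | 0 => [set u]
  | n'.+1 => ball u n' :|: [set y | [exists x in ball u n', e x y]]
  end.

(* shortest-path distance: least n with v in ball u n
   (for a connected graph on T this is < #|T|) *)
Definition dist (u v : T) : nat :=
  find (fun n => v \in ball u n) (iota 0 #|T|).

Definition distS (u : T) (S : {set T}) : nat :=
  \big[minn/#|T|]_(s in S) dist u s.

Definition farness (S : {set T}) : nat := \sum_(u : T) distS u S.

Definition ecc (v : T) : nat := \max_(u : T) dist u v.

Definition cnbhd (v : T) : {set T} := v |: [set w | e v w].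

Definition dominates (u v : T) : bool := cnbhd v \subset cnbhd u.

Definition compGminus (u w : T) : {set T} :=
  [set y | (y != u) && connect (fun a b => [&& e a b, a != u & b != u]) w y].

End GraphDefs.

Section ILP.
Variables (T : finType) (e : rel T) (D A : {set T}) (rho : T -> T)
          (d : T -> nat) (k : nat).

Definition alpha (u : T) : nat := #|[set w in A | rho w == u]|.

(* a candidate assignment x_{v,i} is a function x : T -> nat -> bool;
   only the coordinates v \notin A, i <= d v are meaningful *)
Definition ilp_obj (x : T -> nat -> bool) : nat :=
  \sum_(v in ~: A) \sum_(i < (d v).+1) (x v i : nat) * (alpha v * i.+1 + i).

Definition ilp_feasible (x : T -> nat -> bool) : Prop :=
  [/\ \sum_(v in ~: D) (x v 0 : nat) = k,
      (forall v, v \notin A -> \sum_(i < (d v).+1) (x v i : nat) = 1)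
    & (forall v, v \notin A -> forall i, i < d v ->
         (x v i : nat) <= \sum_(w in ~: D | dist e v w == i) (x w 0 : nat))].

Definition ilp_optimal (x : T -> nat -> bool) : Prop :=
  ilp_feasible x /\ forall y, ilp_feasible y -> ilp_obj x <= ilp_obj y.

End ILP.

(* Main.v *)
Require Import Defs.
From mathcomp Require Import all_boot zify.
Set Implicit Arguments. Unset Strict Implicit. Unset Printing Implicit Defensive.

Lemma ballS (T : finType) (e : rel T) u n y :
  (y \in ball e u n.+1) = (y \in ball e u n) || [exists x in ball e u n, e x y].
Proof. by rewrite /= !inE. Qed.

Lemma ball_mono (T : finType) (e : rel T) u m n : m <= n ->
  {subset ball e u m <= ball e u n}.
Proof.
move=> /subnK <-; elim: (n - m) => [|j IH] y Hy //.
by rewrite addSn ballS IH.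
Qed.

Lemma ball_trans (T : finType) (e : rel T) u v w a b :
  v \in ball e u a -> w \in ball e v b -> w \in ball e u (a + b).
Proof.
move=> Hv; elim: b w => [|b IH] w.
  by rewrite addn0 /= inE => /eqP ->.
rewrite addnS !ballS => /orP [/IH -> //|/existsP [x /andP [Hx Hxw]]].
by apply/orP; right; apply/existsP; exists x; rewrite IH.
Qed.

Lemma ball1 (T : finType) (e : rel T) u v : e u v -> v \in ball e u 1.
Proof. by move=> H; rewrite ballS; apply/orP; right; apply/existsP; exists u; rewrite /= inE eqxx. Qed.

Lemma ball_sym (T : finType) (e : rel T) (e_sym : symmetric e) u v n :
  v \in ball e u n -> u \in ball e v n.
Proof.
elim: n u v => [|n IH] u v.
  by rewrite /= !inE => /eqP ->.
rewrite ballS => /orP [/IH H|/existsP [x /andP [Hx Hxv]]].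
  exact: (ball_mono (leqnSn n)).
have := ball_trans (ball1 (e:=e) (u:=v) (v:=x) _) (IH _ _ Hx).
by rewrite e_sym add1n; apply.
Qed.

Lemma path_ball (T : finType) (e : rel T) u p :
  path e u p -> last u p \in ball e u (size p).
Proof.
elim: p u => [|y p IH] u /=; first by rewrite inE.
move=> /andP [Huy Hp].
have := ball_trans (ball1 Huy) (IH _ Hp).
by rewrite add1n.
Qed.

Lemma reach (T : finType) (e : rel T) (e_conn : forall u v : T, connect e u v) u v :
  exists2 n, n < #|T| & v \in ball e u n.
Proof.
have /connectP [p Hp ->] := e_conn u v.
case: (shortenP Hp) => p' Hp' Hu _.
exists (size p'); last exact: path_ball.
have := card_uniqP Hu => /= <-; exact: max_card.
Qed.

Lemma dist_lt (T : finType) (e : rel T) (e_conn : forall u v : T, connect e u v) u v :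
  dist e u v < #|T|.
Proof.
have [n Hn Hb] := reach e_conn u v.
have Hh : has (fun n => v \in ball e u n) (iota 0 #|T|).
  by apply/hasP; exists n => //; rewrite mem_iota.
by move: Hh; rewrite has_find size_iota.
Qed.

Lemma dist_ball (T : finType) (e : rel T) (e_conn : forall u v : T, connect e u v) u v :
  v \in ball e u (dist e u v).
Proof.
have [n Hn Hb] := reach e_conn u v.
have Hh : has (fun n => v \in ball e u n) (iota 0 #|T|).
  by apply/hasP; exists n => //; rewrite mem_iota.
have := nth_find 0 Hh.
rewrite nth_iota; last by move: Hh; rewrite has_find size_iota.
by rewrite add0n.
Qed.

Lemma dist_min (T : finType) (e : rel T) (e_conn : forall u v : T, connect e u v) u v n :
  v \in ball e u n -> dist e u v <= n.
Proof.
move=> Hb; rewrite leqNgt; apply/negP => Hlt.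
have Hd := dist_lt e_conn u v.
have := before_find 0 Hlt.
by rewrite nth_iota ?add0n ?Hb // (ltn_trans Hlt).
Qed.

Lemma dist_sym (T : finType) (e : rel T) (e_sym : symmetric e)
  (e_conn : forall u v : T, connect e u v) u v : dist e u v = dist e v u.
Proof.
apply/eqP; rewrite eqn_leq; apply/andP; split; apply: dist_min => //;
  apply: ball_sym => //; exact: dist_ball.
Qed.

Lemma dist_tri (T : finType) (e : rel T) (e_conn : forall u v : T, connect e u v) u v w :
  dist e u w <= dist e u v + dist e v w.
Proof. by apply: dist_min => //; apply: ball_trans; apply: dist_ball. Qed.

Lemma dist0 (T : finType) (e : rel T) (e_conn : forall u v : T, connect e u v) u v :
  (dist e u v == 0) = (u == v).
Proof.
apply/idP/eqP.
  move=> /eqP H; have := dist_ball e_conn u v; rewrite H /= inE => /eqP ->//.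
move=> ->; rewrite -leqn0; apply: dist_min => //; by rewrite /= inE.
Qed.

Lemma dist_edge (T : finType) (e : rel T) (e_conn : forall u v : T, connect e u v) u v :
  e u v -> dist e u v <= 1.
Proof. by move=> H; apply: dist_min => //; apply: ball1. Qed.

Lemma dist_dom (T : finType) (e : rel T) (e_sym : symmetric e)
  (e_conn : forall u v : T, connect e u v) u v x :
  dominates e u v -> x != v -> dist e x u <= dist e x v.
Proof.
move=> Hdom Hxv.
have Hb := dist_ball e_conn x v.
case Hn: (dist e x v) Hb => [|m].
  by move: Hn => /eqP; rewrite dist0 // (negbTE Hxv).
rewrite ballS => /orP [Hb|/existsP [y /andP [Hy Hyv]]].
  by have := dist_min e_conn Hb; rewrite Hn ltnn.
have Hy' : y \in cnbhd e u.
  by apply: (subsetP Hdom); rewrite /cnbhd !inE e_sym Hyv orbT.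
move: Hy'; rewrite /cnbhd !inE => /orP [/eqP Hyu|Huy].
  by apply: dist_min => //; apply: (ball_mono (leqnSn m)); rewrite -Hyu.
apply: dist_min => //; rewrite ballS; apply/orP; right; apply/existsP; exists y.
by rewrite Hy e_sym.
Qed.


Lemma bigminn_le (I : eqType) (r : seq I) (P : pred I) (F : I -> nat) a s :
  s \in r -> P s -> \big[minn/a]_(i <- r | P i) F i <= F s.
Proof.
elim: r => [|x r IH] //; rewrite inE big_cons => /orP [/eqP <-|Hs] Ps.
  by rewrite Ps geq_minl.
case: (P x); last exact: IH.
by apply: leq_trans (geq_minr _ _) (IH Hs Ps).
Qed.

Lemma distS_le (T : finType) (e : rel T) u (S : {set T}) s :
  s \in S -> distS e u S <= dist e u s.
Proof. by move=> Hs; rewrite /distS; apply: bigminn_le => //; rewrite mem_index_enum. Qed.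

Lemma distS_attain (T : finType) (e : rel T) (e_conn : forall u v : T, connect e u v)
  u (S : {set T}) s0 : s0 \in S -> exists2 s, s \in S & distS e u S = dist e u s.
Proof.
move=> Hs0.
have : distS e u S = #|T| \/ exists2 s, s \in S & distS e u S = dist e u s.
  rewrite /distS; apply: (big_ind (fun m => m = #|T| \/ exists2 s, s \in S & m = dist e u s)).
  - by left.
  - move=> a b Ha Hb; rewrite /minn; case: ifP => _; [exact: Ha| exact: Hb].
  - by move=> s Hs; right; exists s.
case=> // H; have := distS_le e u Hs0; have := dist_lt e_conn u s0; rewrite H; lia.
Qed.

Lemma comp_dist (T : finType) (e : rel T) (e_sym : symmetric e)
  (e_conn : forall u v : T, connect e u v) u w s :
  w != u -> s \notin compGminus e u w -> dist e u s < dist e w s.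
Proof.
move=> Hwu Hs.
have key : forall n y, y \in ball e w n -> y \in compGminus e u w \/ dist e u y < n.
  elim=> [|n IH] y.
    rewrite /= inE => /eqP ->; left; by rewrite /compGminus inE Hwu connect0.
  rewrite ballS => /orP [/IH [H|H]|/existsP [x /andP [Hx Hxy]]].
  - by left.
  - by right; apply: (leq_trans H).
  case: (IH _ Hx) => H.
    case Hyu: (y == u).
      by right; move/eqP: Hyu => ->; have := dist0 e_conn u u; rewrite eqxx => /eqP ->.
    left; move: H; rewrite /compGminus !inE Hyu /= => /andP [Hxu Hc].
    apply: (connect_trans Hc); apply: connect1; by rewrite Hxy Hxu Hyu.
  right; have := dist_tri e_conn u x y; have := dist_edge e_conn Hxy; lia.
case: (key _ _ (dist_ball e_conn w s)) => //; by move=> H; rewrite H in Hs.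
Qed.

Lemma distS_absorb (T : finType) (e : rel T) (e_sym : symmetric e)
  (e_conn : forall u v : T, connect e u v) u w (S : {set T}) s0 :
  w != u -> dominates e u w -> (forall s, s \in S -> s \notin compGminus e u w) ->
  s0 \in S -> distS e w S = (distS e u S).+1.
Proof.
move=> Hwu Hdom HS Hs0.
have Hwu1 : dist e w u <= 1.
  have : w \in cnbhd e u by apply: (subsetP Hdom); rewrite /cnbhd !inE eqxx.
  rewrite /cnbhd !inE (negbTE Hwu) /= => Huw.
  by rewrite dist_sym //; apply: dist_edge.
have [su Hsu Eu] := distS_attain e_conn u Hs0.
have [sw Hsw Ew] := distS_attain e_conn w Hs0.
apply/eqP; rewrite eqn_leq; apply/andP; split.
  have := distS_le e w Hsu; have := dist_tri e_conn w u su; lia.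
have := distS_le e u Hsw; have := comp_dist e_sym e_conn Hwu (HS _ Hsw). lia.
Qed.

Lemma distS0 (T : finType) (e : rel T) (e_conn : forall u v : T, connect e u v) u (S : {set T}) :
  u \in S -> distS e u S = 0.
Proof. move=> Hu; have := distS_le e u Hu; have := dist0 e_conn u u; rewrite eqxx => /eqP ->; lia. Qed.

Lemma distS0_in (T : finType) (e : rel T) (e_conn : forall u v : T, connect e u v) u (S : {set T}) :
  distS e u S = 0 -> exists2 s, s \in S & u = s.
Proof.
rewrite /distS; apply: (big_ind (fun m => m = 0 -> exists2 s, s \in S & u = s)).
- have := dist_lt e_conn u u; lia.
- move=> a b Ha Hb; rewrite /minn; case: ifP => _; [exact: Ha| exact: Hb].
- move=> s Hs /eqP; rewrite dist0 // => /eqP ->; by exists s.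
Qed.


Lemma sum_onehot (n i0 : nat) (F : nat -> nat) : i0 < n ->
  \sum_(i < n) ((i == i0 :> nat) : nat) * F i = F i0.
Proof.
move=> Hi0; rewrite (bigD1 (Ordinal Hi0)) //= eqxx mul1n big1 ?addn0 //.
move=> i Hi; suff -> : (i == i0 :> nat) = false by [].
by apply/negbTE; apply: contra Hi => /eqP Hii; apply/eqP; apply: val_inj.
Qed.

Lemma sum_pos_ex (I : finType) (P : pred I) (F : I -> nat) :
  0 < \sum_(i | P i) F i -> exists2 i, P i & 0 < F i.
Proof.
move=> H; case: (boolP [exists i, P i && (0 < F i)]) => [/existsP [i /andP [? ?]]|Hn].
  by exists i.
move: H; rewrite big1 // => i Pi; apply/eqP; rewrite -leqn0 leqNgt.
by apply: contra Hn => Hf; apply/existsP; exists i; rewrite Pi.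
Qed.

Lemma sum_ge1 (I : finType) (P : pred I) (F : I -> nat) i :
  P i -> 0 < F i -> 0 < \sum_(j | P j) F j.
Proof. by move=> Pi Fi; rewrite (bigD1 i) //= addn_gt0 Fi. Qed.

Lemma onehot (n : nat) (f : nat -> bool) : \sum_(i < n) (f i : nat) = 1 ->
  exists2 i0, i0 < n & forall i, i < n -> f i = (i == i0).
Proof.
move=> H.
have [i _ Hi] : exists2 i : 'I_n, true & 0 < f i by apply: sum_pos_ex; rewrite H.
exists i => // j Hj; case Hji: (j == i :> nat).
  by move/eqP: Hji => ->; move: Hi; case: (f i).
apply/negbTE/negP => Hfj.
have : \sum_(l < n) (((l == i :> nat) : nat) * 1 + ((l == j :> nat) : nat) * 1) <= 1.
  apply: (leq_trans _ (eq_leq H)); apply: leq_sum => l _; rewrite !muln1.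
  case Eli: (l == i :> nat); case Elj: (l == j :> nat) => //.
  - by move/eqP: Eli Elj => -> /eqP E; rewrite E eqxx in Hji.
  - by move/eqP: Eli => ->; move: Hi; case: (f i).
  - by move/eqP: Elj => ->; rewrite Hfj.
by rewrite big_split /= (sum_onehot (fun _ => 1) (ltn_ord i)) (sum_onehot (fun _ => 1) Hj).
Qed.

Lemma sum_card (T : finType) (X : {set T}) : \sum_(y : T) ((y \in X) : nat) = #|X|.
Proof. by rewrite -sum1_card [in RHS]big_mkcond /=; apply: eq_bigr => y _; case: (y \in X). Qed.

Lemma extend_set (T : finType) (B A0 : {set T}) n :
  A0 \subset B -> #|A0| <= n <= #|B| -> exists C : {set T}, [/\ A0 \subset C, C \subset B & #|C| = n].
Proof.
move=> Hsub /andP [H1 H2].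
move: {2}(n - #|A0|) (erefl (n - #|A0|)) => m; elim: m A0 Hsub H1 => [|m IH] A0 Hsub H1 Hm.
  by exists A0; split => //; apply/eqP; rewrite eqn_leq H1 -subn_eq0 Hm.
have : 0 < #|B :\: A0|.
  have := cardsID A0 B; have : #|B :&: A0| <= #|A0| by apply: subset_leq_card; apply: subsetIr.
  lia.
rewrite card_gt0 => /set0Pn [z]; rewrite inE => /andP [HzA HzB].
have Hc : #|z |: A0| = #|A0|.+1 by rewrite cardsU1 HzA.
case: (IH (z |: A0)).
- by rewrite subUset sub1set HzB.
- lia.
- lia.
move=> C [HC1 HC2 HC3]; exists C; split => //.
by apply: subset_trans HC1; apply: subsetUr.
Qed.


Lemma obj_far (T : finType) (e : rel T) (e_sym : symmetric e)
  (e_conn : forall u v : T, connect e u v) (D A : {set T}) (rho : T -> T)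
  (Hrho : forall w, w \in A -> rho w \notin A)
  (Hcomp : forall u, u \in rho @: A ->
     forall w, w \in [set w in A | rho w == u] ->
       [/\ w != u,
           compGminus e u w \subset [set w in A | rho w == u],
           compGminus e u w \subset D
         & dominates e u w])
  (S : {set T}) s0 (HS : S \subset ~: D) (Hs0 : s0 \in S) :
  \sum_(v in ~: A) (alpha A rho v * (distS e v S).+1 + distS e v S) = farness e S.
Proof.
rewrite big_split /= /farness [in RHS](bigID (fun v => v \in A)) /=; congr (_ + _); last first.
  by apply: eq_bigl => v; rewrite inE.
have E : forall v, v \in ~: A -> alpha A rho v * (distS e v S).+1 =
    \sum_(w | (w \in A) && (rho w == v)) distS e w S.
  move=> v Hv; rewrite /alpha -sum_nat_const; apply: eq_big => [w|w]; first by rewrite inE.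
  rewrite inE => /andP [HwA /eqP Hrw].
  have Hu : v \in rho @: A by rewrite -Hrw; apply: imset_f.
  have Hw : w \in [set w in A | rho w == v] by rewrite inE HwA Hrw eqxx.
  case: (Hcomp v Hu w Hw) => Hwv _ HCD Hdom.
  rewrite (distS_absorb e_sym e_conn Hwv Hdom _ Hs0) //.
  move=> s Hs; apply: contraT; rewrite negbK => Hc.
  have := subsetP HS s Hs; have := subsetP HCD s Hc; by rewrite inE => ->.
rewrite (eq_bigr _ E) -(partition_big rho (fun v => v \in ~: A)) //.
by move=> w Hw; rewrite inE Hrho.
Qed.


Theorem mainTheorem1 (T : finType) (e : rel T)
  (e_sym : symmetric e) (e_irr : irreflexive e)
  (e_conn : forall u v : T, connect e u v)
  (k : nat) (k_ge1 : 1 <= k) (k_le : k <= #|T|)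
  (D : {set T})
  (HD : forall v, v \in D -> exists2 u, u \notin D & dominates e u v)
  (HDk : k <= #|~: D|)
  (A : {set T}) (rho : T -> T)
  (HAD : A \subset D)
  (Hrho : forall w, w \in A -> rho w \notin A)
  (Hcomp : forall u, u \in rho @: A ->
     forall w, w \in [set w in A | rho w == u] ->
       [/\ w != u,
           compGminus e u w \subset [set w in A | rho w == u],
           compGminus e u w \subset D
         & dominates e u w])
  (d : T -> nat) (Hd : forall v, v \notin A -> 1 <= d v)
  (x : T -> nat -> bool)
  (Hopt : ilp_optimal e D A rho d k x)
  (Hsuff : forall v, v \notin A -> x v (d v) = false \/ ecc e v <= d v) :
  let Sstar := [set v in ~: D | x v 0] in
  [/\ #|Sstar| = k,
      (forall S : {set T}, #|S| = k -> farness e Sstar <= farness e S)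
    & ilp_obj A rho d x = farness e Sstar].
Proof.
move=> Sstar.
case: Hopt => [[H1 H2 H3] Hmin].
have HSD : Sstar \subset ~: D by apply/subsetP => v; rewrite inE => /andP [].
have Hcard : #|Sstar| = k.
  rewrite -H1 -sum_card [in RHS]big_mkcond /=; apply: eq_bigr => v _.
  by rewrite !inE; case: (v \in D).
have [s0 Hs0] : exists s0, s0 \in Sstar by apply/set0Pn; rewrite -card_gt0 Hcard.
have Key : forall v, v \notin A -> distS e v Sstar <= d v /\
    forall i, i < (d v).+1 -> x v i = (i == distS e v Sstar).
  move=> v Hv.
  have [i0 Hi0 Hx] := onehot (H2 v Hv).
  set j := distS e v Sstar.
  have Hle : j <= i0.
    case: (ltngtP i0 (d v)) => Hi.
    - have := H3 v Hv i0 Hi; rewrite Hx // eqxx => /sum_pos_ex [w /andP [Hw /eqP Hdw] Hxw].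
      have Hws : w \in Sstar by rewrite inE Hw; move: Hxw; case: (x w 0).
      by rewrite -Hdw; apply: distS_le.
    - by move: Hi0; rewrite ltnS leqNgt Hi.
    - case: (Hsuff v Hv) => [Hf|Hecc].
        by move: Hf; rewrite -Hi Hx // eqxx.
      apply: leq_trans (distS_le e v Hs0) _; rewrite dist_sym // Hi.
      apply: leq_trans Hecc; exact: (@leq_bigmax _ (fun u => dist e u v) s0).
  have Hge : i0 <= j.
    rewrite leqNgt; apply/negP => Hlt.
    have Hj0 : j != 0.
      apply/negP => /eqP Hj; have [s Hs Hvs] := distS0_in e_conn Hj.
      move: Hs; rewrite -Hvs inE Hx //; first by rewrite andbC; case: i0 Hlt {Hx Hi0 Hle}; rewrite Hj.
    pose x' := fun w i => if w == v then i == j else x w i.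
    have Hx'0 : forall w, x' w 0 = x w 0.
      move=> w; rewrite /x'; case: eqP => // ->.
      rewrite Hx //.
      by rewrite eq_sym (negbTE Hj0); case: i0 Hlt {Hx Hi0 Hle}.
    have Hfeas : ilp_feasible e D A d k x'.
      split.
      - by rewrite -H1; apply: eq_bigr => w _; rewrite Hx'0.
      - move=> w Hw; rewrite /x'; case: eqP => [->|_]; last exact: H2.
        apply: etrans (sum_onehot (fun _ => 1) _); first by apply: eq_bigr => i _; rewrite muln1.
        by apply: leq_trans Hi0.
      - move=> w Hw i Hi.
        have -> : \sum_(w0 in ~: D | dist e w w0 == i) (x' w0 0 : nat) =
                  \sum_(w0 in ~: D | dist e w w0 == i) (x w0 0 : nat).
          by apply: eq_bigr => w0 _; rewrite Hx'0.
        rewrite /x'; case: eqP => [Ewv|_]; last exact: H3.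
        subst w; case Eij: (i == j) => //=.
        have [s Hs Es] := distS_attain e_conn v Hs0.
        move: Hs; rewrite inE => /andP [HsD Hxs].
        apply: (sum_ge1 (i:=s)); last by rewrite Hxs.
        by rewrite HsD /= -Es; move/eqP: Eij => ->.
    have := Hmin _ Hfeas.
    rewrite /ilp_obj (bigD1 v) ?inE // [X in _ <= X](bigD1 v) ?inE //=.
    have -> : \sum_(w in ~: A | w != v) \sum_(i < (d w).+1) (x' w i : nat) * (alpha A rho w * i.+1 + i)
            = \sum_(w in ~: A | w != v) \sum_(i < (d w).+1) (x w i : nat) * (alpha A rho w * i.+1 + i).
      by apply: eq_bigr => w /andP [_ Hwv]; rewrite /x' (negbTE Hwv).
    rewrite /x' eqxx /= (sum_onehot (fun i => alpha A rho v * i.+1 + i)); last by apply: leq_trans Hi0.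
    rewrite (eq_bigr (fun i : 'I_(d v).+1 => ((i == i0 :> nat) : nat) * (alpha A rho v * i.+1 + i)));
      last by move=> i _; rewrite Hx.
    rewrite (sum_onehot (fun i => alpha A rho v * i.+1 + i)) //.
    have : alpha A rho v * j.+1 <= alpha A rho v * i0.+1 by apply: leq_mul.
    lia.
  have Ei : i0 = j by apply/eqP; rewrite eqn_leq Hge Hle.
  split; first by move: Hi0; rewrite Ei ltnS.
  by move=> i Hi; rewrite Hx // Ei.
have Hobj : ilp_obj A rho d x = farness e Sstar.
  rewrite /ilp_obj -(obj_far e_sym e_conn Hrho Hcomp HSD Hs0); apply: eq_bigr => v; rewrite inE => Hv.
  case: (Key v Hv) => Hle Hx.
  rewrite (eq_bigr (fun i : 'I_(d v).+1 => ((i == distS e v Sstar :> nat) : nat) * (alpha A rho v * i.+1 + i)));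
    last by move=> i _; rewrite Hx.
  by rewrite (sum_onehot (fun i => alpha A rho v * i.+1 + i)).
split => //.
move=> S HSk.
pose phi := fun v => if v \in D then odflt v [pick u | (u \notin D) && dominates e u v] else v.
have Hphi1 : forall v, phi v \notin D.
  move=> v; rewrite /phi; case: ifP => HvD //=; last by rewrite HvD.
  case: pickP => [u /andP [] //|Hn].
  have [u Hu Hdm] := HD v HvD; by have := Hn u; rewrite Hu Hdm.
have Hphi2 : forall v, v \in D -> dominates e (phi v) v.
  move=> v HvD; rewrite /phi HvD.
  case: pickP => [u /andP [] //|Hn].
  have [u Hu Hdm] := HD v HvD; by have := Hn u; rewrite Hu Hdm.
have Hphi3 : forall v, v \notin D -> phi v = v by rewrite /phi => v /negbTE ->.
have [S' [HS1 HS'D HS'k]] : exists S' : {set T},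
    [/\ phi @: S \subset S', S' \subset ~: D & #|S'| = k].
  apply: extend_set.
    by apply/subsetP => y /imsetP [v _ ->]; rewrite inE Hphi1.
  by rewrite HDk andbT; apply: leq_trans (leq_imset_card _ _) _; rewrite HSk.
have [s1 Hs1] : exists s, s \in S' by apply/set0Pn; rewrite -card_gt0 HS'k.
have [s2 Hs2] : exists s, s \in S by apply/set0Pn; rewrite -card_gt0 HSk.
have Hpt : forall y, distS e y S' + (y \in S' :\: S) <= distS e y S + (y \in S :&: D).
  move=> y.
  case HyS': (y \in S').
    rewrite (distS0 e_conn HyS') !inE HyS' andbT /=.
    case HyS: (y \in S) => //=.
    have : distS e y S != 0.
      by apply/eqP => /(distS0_in e_conn) [s Hs Eys]; rewrite Eys Hs in HyS.
    move=> Hn; clear -Hn; lia.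
  rewrite !inE HyS' andbF /=.
  case HSD': ((y \in S) && (y \in D)).
    move/andP: HSD' => [HyS HyD].
    have Hp : phi y \in S' by apply: (subsetP HS1); apply: imset_f.
    have := distS_le e y Hp.
    have Hdom := Hphi2 y HyD.
    have Hne : y != phi y.
      by apply: contraT; rewrite negbK => /eqP E; have := Hphi1 y; rewrite -E HyD.
    have : y \in cnbhd e (phi y) by apply: (subsetP Hdom); rewrite /cnbhd !inE eqxx.
    rewrite /cnbhd !inE (negbTE Hne) /= => Hed.
    have := dist_edge e_conn Hed; rewrite (dist_sym e_sym e_conn (phi y) y).
    move=> Ha Hb; clear -Ha Hb; lia.
  have [s Hs Es] := distS_attain e_conn y Hs2.
  have Hps : phi s \in S' by apply: (subsetP HS1); apply: imset_f.
  have : dist e y (phi s) <= dist e y s.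
    case HsD : (s \in D).
      apply: dist_dom => //; first exact: Hphi2.
      by apply: contraT; rewrite negbK => /eqP E; rewrite E Hs HsD in HSD'.
    by rewrite Hphi3 ?HsD.
  have := distS_le e y Hps. move=> Ha Hb; clear -Ha Hb Es; lia.
have Hsum : farness e S' + #|S' :\: S| <= farness e S + #|S :&: D|.
  rewrite /farness -!sum_card -!big_split /=; apply: leq_sum => y _; exact: Hpt.
have Hcnt : #|S :&: D| <= #|S' :\: S|.
  have := cardsID S S'; have := cardsID D S; have : #|S' :&: S| <= #|S :\: D|.
    apply: subset_leq_card; apply/subsetP => y; rewrite !inE => /andP [Hy' Hy].
    by rewrite Hy andbT; have := subsetP HS'D y Hy'; rewrite inE.
  move=> Ha Hb Hc; clear -Ha Hb Hc HSk HS'k; lia.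
have HfS' : farness e S' <= farness e S by clear -Hsum Hcnt; lia.
pose yv := fun v (i : nat) => i == minn (distS e v S') (d v).
have Hfy : ilp_feasible e D A d k yv.
  split.
  - rewrite -HS'k -sum_card [in LHS]big_mkcond /=; apply: eq_bigr => v _.
    rewrite inE; case HvD: (v \in D) => /=.
      case HvS: (v \in S') => //; have := subsetP HS'D v HvS; by rewrite inE HvD.
    have HvA : v \notin A by apply: contraFN HvD; apply: (subsetP HAD).
    have Hdv := Hd v HvA.
    rewrite /yv; case HvS: (v \in S').
      by rewrite (distS0 e_conn HvS) min0n.
    have : distS e v S' != 0.
      by apply/eqP => /(distS0_in e_conn) [s Hs Eys]; rewrite Eys Hs in HvS.
    move=> Hn; suff -> : (0 == minn (distS e v S') (d v)) = false by [].
    apply: negbTE; rewrite eq_sym -lt0n leq_min; clear -Hn Hdv; lia.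
  - move=> v Hv; apply: etrans (sum_onehot (fun _ => 1) _).
      by apply: eq_bigr => i _; rewrite muln1.
    by rewrite ltnS geq_minr.
  - move=> v Hv i Hi; rewrite /yv; case: eqP => //= Eim.
    have Hmd : distS e v S' < d v by move: Eim Hi; clear; lia.
    have [s Hs Es] := distS_attain e_conn v Hs1.
    apply: (sum_ge1 (i:=s)).
      rewrite (subsetP HS'D s Hs) /=; apply/eqP; move: Eim Hmd Es; clear; lia.
    by rewrite /yv (distS0 e_conn Hs) min0n.
have Hoy : ilp_obj A rho d yv <= farness e S'.
  rewrite /ilp_obj -(obj_far e_sym e_conn Hrho Hcomp HS'D Hs1); apply: leq_sum => v; rewrite inE => Hv.
  rewrite /yv (sum_onehot (fun i => alpha A rho v * i.+1 + i)); last by rewrite ltnS geq_minr.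
  apply: leq_add; last exact: geq_minl.
  by apply: leq_mul => //; rewrite ltnS geq_minl.
rewrite -Hobj; have := Hmin _ Hfy; move=> Ha; clear -Ha Hoy HfS'; lia.
Qed.
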